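(* Let $(G_n)_{n\in\mathbb{N}}$ be an $\mathrm{FO}$-convergent sequence of finite graphs with modeling limit $L$, and let $\xi(x)$ be a formula in the language of graphs with one free variable such that $\xi(L)$ is finite and nonempty, $\xi(L)$ contains no nonempty proper subset of the form $\chi(L)$ for a formula $\chi(x)$ in the language of graphs, and $|\xi(G_n)|=|\xi(L)|$ for every $n$. Then for every formula $\phi$ with $p$ free variables ($p\ge 0$) in the language of rooted graphs there exist a sequence $(r_n)$ with $r_n\in\xi(G_n)$ and a vertex $r\in\xi(L)$ such that $\lim_{n\to\infty}\langle\phi,(G_n,r_n)\rangle=\langle\phi,(L,r)\rangle$.
   Context: Graphs are first-order structures in the language with one binary (edge) relation. For a formula $\phi$ with $p$ free variables and a structure $G$, $\phi(G)=\{\mathbf{v}\in V(G)^p : G\models\phi(\mathbf{v})\}$. The Stone pairing of $\phi$ ($p\ge1$) with a finite graph $G$ is $\langle\phi,G\rangle=|\phi(G)|/|V(G)|^p$; for sentences it is $1$ if $G\models\phi$ and $0$ otherwise. A sequence of finite graphs is $\mathrm{FO}$-convergent if $(\langle\phi,G_n\rangle)$ converges for every formula $\phi$. A modeling is a graph $L$ whose vertex set is a standard Borel space with a probability measure $\nu$ such that every first-order definable set $\phi(L)\subseteq V(L)^p$ is measurable; $\langle\phi,L\rangle=\nu^{\otimes p}(\phi(L))$ (and $1$/$0$ for sentences). $L$ is a modeling limit of $(G_n)$ if $\lim_n\langle\phi,G_n\rangle=\langle\phi,L\rangle$ for all $\phi$. The language of rooted graphs adds a constant symbol $\mathrm{Root}$;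 $(G,r)$ is $G$ with $\mathrm{Root}$ interpreted as $r$, and Stone pairings with rooted structures are defined in the same way. *)

(* Defs.v *)
From HB Require Import structures.
From mathcomp Require Import all_boot all_order all_algebra.
From mathcomp Require Import all_classical all_reals all_analysis.
Set Implicit Arguments. Unset Strict Implicit. Unset Printing Implicit Defensive.
Import Order.TTheory GRing.Theory Num.Theory.
Import numFieldNormedType.Exports.
Local Open Scope classical_set_scope.
Local Open Scope ring_scope.

(* First-order syntax over the signature {edge relation} + constants  *)
(* from a type C.  Language of graphs: C := void (no constants).      *)
(* Language of rooted graphs: C := unit (one constant Root).          *)
Inductive term (C : Type) := TVar of nat | TConst of C.
Arguments TVar {C}. Arguments TConst {C}.

Inductive formula (C : Type) :=
| FEq  of term C & term C
| FAdj of term C & term C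
| FNot of formula C
| FAnd of formula C & formula C
| FEx  of nat & formula C.
Arguments FEq {C}. Arguments FAdj {C}. Arguments FNot {C}.
Arguments FAnd {C}. Arguments FEx {C}.

Definition graph_formula := formula void.
Definition rooted_formula := formula unit.
Definition Root : term unit := TConst tt.

Definition term_vars C (t : term C) : seq nat :=
  match t with TVar i => [:: i] | TConst _ => [::] end.

Fixpoint free_vars C (f : formula C) : seq nat :=
  match f with
  | FEq t1 t2 | FAdj t1 t2 => term_vars t1 ++ term_vars t2
  | FNot g => free_vars g
  | FAnd g h => free_vars g ++ free_vars h
  | FEx i g => [seq j <- free_vars g | j != i]
  end.

(* "phi has p free variables": its free variables are among x_0..x_{p-1} *)
Definition has_fv C (p : nat) (f : formula C) : Prop :=
  all (fun j => j < p)%N (free_vars f).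

Definition term_eval C V (c : C -> V) (e : nat -> option V) (t : term C)
  : option V :=
  match t with TVar i => e i | TConst k => Some (c k) end.

Fixpoint sat C V (adj : V -> V -> Prop) (c : C -> V) (e : nat -> option V)
  (f : formula C) : Prop :=
  match f with
  | FEq t1 t2 => match term_eval c e t1, term_eval c e t2 with
                 | Some a, Some b => a = b | _, _ => False end
  | FAdj t1 t2 => match term_eval c e t1, term_eval c e t2 with
                  | Some a, Some b => adj a b | _, _ => False end
  | FNot g => ~ sat adj c e g
  | FAnd g h => sat adj c e g /\ sat adj c e h
  | FEx i g => exists v : V,
      sat adj c (fun j => if j == i then Some v else e j) g
  end.

Definition env_of V (s : seq V) : nat -> option V := onth s.

Definition defset C V (adj : V -> V -> Prop) (c : C -> V) (p : nat)
  (f : formula C) : set (p.-tuple V) :=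
  [set t : p.-tuple V | sat adj c (env_of t) f].

Arguments defset {C V} adj c p f.

Record fin_graph := FinGraph {
  fvert : finType;
  fadj : rel fvert;
  fadj_sym : symmetric fadj;
  fadj_irr : irreflexive fadj }.

Definition fgadj (G : fin_graph) : fvert G -> fvert G -> Prop :=
  fun x y => fadj x y.

Definition fdefset C (G : fin_graph) (c : C -> fvert G) (p : nat)
  (f : formula C) : {set p.-tuple (fvert G)} :=
  [set t : p.-tuple (fvert G) | `[< sat (@fgadj G) c (env_of t) f >]].

Arguments fdefset {C G} c p f.

Definition fpairing (R : realType) C (G : fin_graph) (c : C -> fvert G)
  (p : nat) (f : formula C) : R :=
  if p is 0 then (if `[< sat (@fgadj G) c (fun _ => None) f >] then 1 else 0)
  else (#|fdefset c p f|%:R / (#|fvert G|%:R ^+ p)).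

Definition fdefset1 C (G : fin_graph) (c : C -> fvert G) (f : formula C)
  : {set fvert G} :=
  [set v : fvert G | `[< sat (@fgadj G) c (env_of [:: v]) f >]].

(* Standard Borel space: the sigma-algebra is the Borel sigma-algebra of
   a Polish (separable, completely metrizable) topology. *)
Definition standard_borel (R : realType) (d : measure_display)
  (T : measurableType d) : Prop :=
  exists dist : T -> T -> R,
    [/\ (forall x y, dist x y = 0 <-> x = y),
        (forall x y, dist x y = dist y x),
        (forall x y z, dist x z <= dist x y + dist y z) &
     [/\
        (forall u : nat -> T,
           (forall e, 0 < e -> exists N, forall m n, (N <= m)%N -> (N <= n)%N ->
               dist (u m) (u n) < e) ->
           exists l, forall e, 0 < e -> exists N, forall n, (N <= n)%N ->
               dist (u n) l < e),
        (exists D : set T, countable D /\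
           forall x e, 0 < e -> exists y, D y /\ dist x y < e) &
        (* measurable sets = Borel sets of the metric topology *)
        (forall A : set T, measurable A <->
           <<s [set B : set T | forall x, B x ->
                  exists e, 0 < e /\ forall y, dist x y < e -> B y] >> A)]].

(* the product measure nu^{(x)p} on p-tuples, defined as the iterated
   integral  nu^{(x)(p+1)}(A) = \int nu^{(x)p}(A_x) dnu(x),  A_x the section *)
Fixpoint tuple_measure (R : realType) (d : measure_display)
  (V : measurableType d) (nu : {measure set V -> \bar R}) (p : nat)
  : set (p.-tuple V) -> \bar R :=
  match p return set (p.-tuple V) -> \bar R with
  | 0 => fun A => if `[< A [tuple] >] then 1%E else 0%E
  | k.+1 => fun A =>
      (\int[nu]_x tuple_measure nu [set t : k.-tuple V | A (cons_tuple x t)])%E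
  end.

Arguments tuple_measure {R d V} nu p.

Definition mpairing (R : realType) (d : measure_display) (V : measurableType d)
  (nu : {measure set V -> \bar R}) (adj : V -> V -> Prop) C (c : C -> V)
  (p : nat) (f : formula C) : R :=
  if p is 0 then (if `[< sat adj c (fun _ => None) f >] then 1 else 0)
  else fine (tuple_measure nu p (defset adj c p f)).

Definition mdefset1 C V (adj : V -> V -> Prop) (c : C -> V) (f : formula C)
  : set V := [set v : V | sat adj c (env_of [:: v]) f].

Definition is_modeling (R : realType) (d : measure_display)
  (V : measurableType d) (nu : probability V R) (adj : V -> V -> Prop) : Prop :=
  [/\ (forall x y, adj x y -> adj y x),
      (forall x, ~ adj x x),
      standard_borel R V &
      (forall p (f : graph_formula), (1 <= p)%N -> has_fv p f ->
         measurable (defset adj (@of_void V) p f))].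

Definition FO_convergent (R : realType) (G : nat -> fin_graph) : Prop :=
  forall p (f : graph_formula), has_fv p f ->
    cvg ((fun n => @fpairing R _ (G n) (@of_void _) p f) @ \oo).

Definition modeling_limit (R : realType) (G : nat -> fin_graph)
  (d : measure_display) (V : measurableType d) (nu : probability V R)
  (adj : V -> V -> Prop) : Prop :=
  is_modeling nu adj /\
  forall p (f : graph_formula), has_fv p f ->
    (fun n => @fpairing R _ (G n) (@of_void _) p f) @ \oo
      --> mpairing nu adj (@of_void V) p f.

(* Main.v *)
Require Import Defs.
From HB Require Import structures.
From mathcomp Require Import all_boot all_order all_algebra.
From mathcomp Require Import all_classical all_reals all_analysis.
From mathcomp Require Import measurable_realfun.
From mathcomp Require Import zify ring lra.
Set Implicit Arguments. Unset Strict Implicit. Unset Printing Implicit Defensive.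
Import Order.TTheory GRing.Theory Num.Theory.
Import numFieldNormedType.Exports.
Local Open Scope classical_set_scope.
Local Open Scope ring_scope.
Definition tmap C D (s : nat -> nat) (k : C -> term D) (t : term C) : term D :=
  match t with TVar i => TVar (s i) | TConst c => k c end.

Fixpoint fmap C D (s : nat -> nat) (k : C -> term D) (f : formula C) : formula D :=
  match f with
  | FEq t1 t2 => FEq (tmap s k t1) (tmap s k t2)
  | FAdj t1 t2 => FAdj (tmap s k t1) (tmap s k t2)
  | FNot g => FNot (fmap s k g)
  | FAnd g h => FAnd (fmap s k g) (fmap s k h)
  | FEx i g => FEx (s i) (fmap s k g)
  end.

Definition upd V (e : nat -> option V) (i : nat) (v : V) :=
  fun j => if j == i then Some v else e j.

Lemma term_eval_map C D V (cC : C -> V) (cD : D -> V) s k e (t : term C) :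
  (forall c0, term_eval cD e (k c0) = Some (cC c0)) ->
  term_eval cD e (tmap s k t) = term_eval cC (e \o s) t.
Proof. by case: t => [i|c0] //= H; rewrite H. Qed.

Lemma sat_fmap C D V (adj : V -> V -> Prop) (cC : C -> V) (cD : D -> V) s k
  (f : formula C) : injective s -> (forall c0 i, k c0 <> TVar (s i)) ->
  forall e, (forall c0, term_eval cD e (k c0) = Some (cC c0)) ->
  sat adj cD e (fmap s k f) <-> sat adj cC (e \o s) f.
Proof.
move=> si hk; elim: f => [t1 t2|t1 t2|g IH|g IHg h IHh|i g IH] e he /=.
- by rewrite !(@term_eval_map _ _ _ cC cD s k e _ he).
- by rewrite !(@term_eval_map _ _ _ cC cD s k e _ he).
- by rewrite IH.
- by rewrite IHg // IHh.
- split=> -[v Hv]; exists v.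
  + have := (IH (fun j => if j == s i then Some v else e j)).
    move=> [|H _].
      move=> c0; case E: (k c0) (he c0) (hk c0) => [y|c1] //= <- Hy.
      by case: eqP => // Ey; exfalso; apply: (Hy i); rewrite Ey.
    move: (H Hv); congr sat; apply: funext => j /=.
    by rewrite (inj_eq si).
  + have := (IH (fun j => if j == s i then Some v else e j)).
    move=> [|_ H].
      move=> c0; case E: (k c0) (he c0) (hk c0) => [y|c1] //= <- Hy.
      by case: eqP => // Ey; exfalso; apply: (Hy i); rewrite Ey.
    apply: H; move: Hv; congr sat; apply: funext => j /=.
    by rewrite (inj_eq si).
Qed.

Lemma sat_agree C V (adj : V -> V -> Prop) (c : C -> V) (f : formula C) :
  forall e1 e2, (forall j, j \in free_vars f -> e1 j = e2 j) ->
  sat adj c e1 f <-> sat adj c e2 f.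
Proof.
elim: f => [t1 t2|t1 t2|g IH|g IHg h IHh|i g IH] e1 e2 H /=.
- case: t1 H => [i1|c1]; case: t2 => [i2|c2] /= H;
    rewrite ?H ?inE ?eqxx ?orbT //.
- case: t1 H => [i1|c1]; case: t2 => [i2|c2] /= H;
    rewrite ?H ?inE ?eqxx ?orbT //.
- by rewrite (IH e1 e2).
- rewrite (IHg e1 e2) ?(IHh e1 e2) // => j Hj; apply: H;
    by rewrite mem_cat Hj ?orbT.
- have H' : forall v j, j \in free_vars g ->
    (if j == i then Some v else e1 j) = (if j == i then Some v else e2 j).
    move=> v j Hj; case: ifP => // ji; apply: H.
    by rewrite mem_filter ji Hj.
  by split=> -[v Hv]; exists v; move: Hv; apply IH => j Hj; rewrite H'.
Qed.

Lemma term_vars_map C D s (k : C -> term D) (t : term C) j :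
  j \in term_vars (tmap s k t) ->
  (exists2 i, i \in term_vars t & j = s i) \/ (exists c0, k c0 = TVar j).
Proof.
case: t => [i|c0] /=; rewrite ?inE.
  by move/eqP=> ->; left; exists i; rewrite ?inE.
by case E: (k c0) => [y|c1] //=; rewrite inE => /eqP ->; right; exists c0.
Qed.

Lemma free_vars_fmap C D s (k : C -> term D) (f : formula C) j :
  injective s -> j \in free_vars (fmap s k f) ->
  (exists2 i, i \in free_vars f & j = s i) \/ (exists c0, k c0 = TVar j).
Proof.
move=> si; elim: f j => [t1 t2|t1 t2|g IH|g IHg h IHh|i g IH] j /=.
- rewrite mem_cat => /orP [] /term_vars_map [[i Hi ->]|]; auto;
    by left; exists i; rewrite // mem_cat Hi ?orbT.
- rewrite mem_cat => /orP [] /term_vars_map [[i Hi ->]|]; auto;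
    by left; exists i; rewrite // mem_cat Hi ?orbT.
- exact: IH.
- rewrite mem_cat => /orP [/IHg|/IHh] [[i Hi ->]|]; auto;
    by left; exists i; rewrite // mem_cat Hi ?orbT.
- rewrite mem_filter => /andP [ji /IH [[i' Hi' E]|]]; auto.
  left; exists i' => //; rewrite mem_filter Hi' andbT.
  by apply: contra ji => /eqP Ei; rewrite E Ei.
Qed.
Section Forms.
Variables (p : nat) (phi : rooted_formula).

Definition sig (off y b : nat) (j : nat) : nat :=
  if (j < p)%N then (off + b * p + j)%N else (j + (off + y + b * p + p + 1))%N.

Lemma sig_inj off y b : injective (sig off y b).
Proof. move=> i j; rewrite /sig; case: ifP; case: ifP => /= ? ?; lia. Qed.

Definition blk off y b : graph_formula :=
  fmap (sig off y b) (fun _ : unit => TVar y) phi.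

Fixpoint Conj off y m : graph_formula :=
  match m with
  | 0 => blk off y 0
  | m'.+1 => FAnd (blk off y m) (Conj off y m')
  end.

Lemma sat_Conj V (adj : V -> V -> Prop) e r off y m :
  (forall b, (b <= m)%N -> forall i, sig off y b i <> y) -> e y = Some r ->
  sat adj (@of_void V) e (Conj off y m) <->
  forall b, (b <= m)%N -> sat adj (fun _ => r) (e \o sig off y b) phi.
Proof.
move=> Hs Hy.
have Hb b : (b <= m)%N -> sat adj (@of_void V) e (blk off y b) <->
    sat adj (fun _ => r) (e \o sig off y b) phi.
  move=> bm; apply: sat_fmap; first exact: sig_inj.
  - by move=> c0 i [] /esym; apply: Hs.
  - by move=> c0.
elim: m Hs Hb => [|m IH] Hs Hb /=.
  rewrite Hb //; split => [H b|H]; last exact: H.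
  by rewrite leqn0 => /eqP ->.
rewrite IH; first last.
- by move=> b bm; apply: Hb; apply: leqW.
- by move=> b bm; apply: Hs; apply: leqW.
rewrite Hb //; split => [[H1 H2] b|H]; last first.
  by split; [apply: H | move=> b bm; apply: H; apply: leqW].
by rewrite leq_eqVlt => /orP [/eqP ->|]; [|apply: H2].
Qed.

Fixpoint blocks {V : Type} (P : seq V -> Prop) m (s : seq V) : Prop :=
  match m with
  | 0 => P (take p s)
  | m'.+1 => P (take p s) /\ blocks P m' (drop p s)
  end.

Lemma blocksE V (P : seq V -> Prop) m s :
  blocks P m s <-> forall b, (b <= m)%N -> P (take p (drop (b * p) s)).
Proof.
elim: m s => [|m IH] s /=.
  split => [H b|H]; first by rewrite leqn0 => /eqP ->; rewrite mul0n drop0.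
  by have := H 0 (leq0n _); rewrite mul0n drop0.
rewrite IH; split => [[H1 H2] [|b] bm|H].
- by rewrite mul0n drop0.
- by rewrite mulSn addnC -drop_drop; apply: H2.
split; first by have := H 0 (leq0n _); rewrite mul0n drop0.
by move=> b bm; rewrite drop_drop addnC -mulSn; apply: H.
Qed.
End Forms.

Lemma onth_take_drop V (s : seq V) n q j :
  onth (take q (drop n s)) j = if (j < q)%N then onth s (n + j) else None.
Proof.
rewrite !onthE map_take map_drop; case: ifP => jq.
  by rewrite nth_take // nth_drop.
rewrite nth_default // size_take; case: ltnP => h; move/negbT: jq; rewrite -leqNgt; lia.
Qed.

Section Main_forms.
Variables (p : nat) (phi : rooted_formula) (xi : graph_formula).
Hypothesis fv_phi : has_fv p phi.
Hypothesis fv_xi : has_fv 1 xi.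

Lemma fv_Conj off y m j : j \in free_vars (Conj p phi off y m) ->
  (exists b, [/\ (b <= m)%N, (j >= off + b * p)%N & (j < off + b * p + p)%N]) \/ j = y.
Proof.
have Hb b : j \in free_vars (blk p phi off y b) ->
    (exists b', [/\ (b' <= b)%N, (j >= off + b' * p)%N & (j < off + b' * p + p)%N]) \/ j = y.
  move=> /free_vars_fmap -/(_ (@sig_inj p off y _)) [[i Hi ->]|[c0 [->]]]; last by right.
  have ip : (i < p)%N by move/allP: fv_phi => /(_ i Hi).
  by left; exists b; split => //; rewrite /sig ip; lia.
elim: m => [|m IH] /=; first exact: Hb.
rewrite mem_cat => /orP [/Hb|/IH] [[b [bm H1 H2]]|->]; try by right.
  by left; exists b.
by left; exists b; split => //; exact: leqW.
Qed.

Lemma sat_Conj_blocks V (adj : V -> V -> Prop) e v off y m (s : seq V) :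
  (forall b, (b <= m)%N -> forall i, sig p off y b i <> y) -> e y = Some v ->
  (forall b j, (b <= m)%N -> (j < p)%N -> e (off + b * p + j)%N = onth s (b * p + j)) ->
  sat adj (@of_void V) e (Conj p phi off y m) <->
  blocks p (fun u => sat adj (fun _ => v) (env_of u) phi) m s.
Proof.
move=> Hs Hy He; rewrite (@sat_Conj p phi V adj e v off y m Hs Hy) blocksE.
have E b : (b <= m)%N -> sat adj (fun=> v) (e \o sig p off y b) phi <->
   sat adj (fun=> v) (env_of (take p (drop (b * p) s))) phi.
  move=> bm; apply: sat_agree => j Hj.
  have jp : (j < p)%N by move/allP: fv_phi => /(_ j Hj).
  by rewrite /= /sig jp He // /env_of onth_take_drop jp.
by split => H b bm; [rewrite -E|rewrite E] => //; apply: H.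
Qed.

Definition tau y j := if j == 0%N then y else (j + y)%N.
Lemma tau_inj y : injective (tau y).
Proof. by move=> i j; rewrite /tau; do 2 case: eqP; lia. Qed.

Definition Psi m : graph_formula :=
  FEx (p * m.+1) (FAnd (fmap (tau (p * m.+1)) (@of_void (term void)) xi)
                       (Conj p phi 0 (p * m.+1) m)).
Definition Theta m : graph_formula := Conj p phi 1 0 m.

Lemma sat_xi_tau V (adj : V -> V -> Prop) y e v : e y = Some v ->
  sat adj (@of_void V) e (fmap (tau y) (@of_void (term void)) xi) <->
  sat adj (@of_void V) (env_of [:: v]) xi.
Proof.
move=> ey; rewrite sat_fmap; [|exact: tau_inj|by case|by case].
apply: sat_agree => j Hj; have j0 : j = 0%N.
  by move/allP: fv_xi => /(_ j Hj); case: j {Hj}.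
by rewrite j0 /= /tau eqxx ey.
Qed.

Lemma sat_Psi V (adj : V -> V -> Prop) (t : seq V) m : size t = (p * m.+1)%N ->
  sat adj (@of_void V) (env_of t) (Psi m) <->
  exists v, sat adj (@of_void V) (env_of [:: v]) xi /\
     blocks p (fun u => sat adj (fun _ => v) (env_of u) phi) m t.
Proof.
move=> st /=.
have E v : sat adj (@of_void V) (fun j => if j == (p * m.+1)%N then Some v else env_of t j)
     (Conj p phi 0 (p * m.+1) m) <-> blocks p (fun u => sat adj (fun _ => v) (env_of u) phi) m t.
  rewrite (@sat_Conj_blocks V adj _ v _ _ _ t) //.
  + move=> b bm i; have H : (b * p + p <= p * m.+1)%N.
      by rewrite addnC -mulSn mulnC leq_mul2l ltnS bm orbT.
    rewrite /sig; case: ltnP; lia.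
  + by rewrite eqxx.
  + move=> b j bm jp /=; have H : (b * p + p <= p * m.+1)%N.
      by rewrite addnC -mulSn mulnC leq_mul2l ltnS bm orbT.
    case: eqP => //; lia.
split => -[v [H1 H2]]; exists v; split.
- by move: H1; rewrite (@sat_xi_tau V adj _ _ v); [|rewrite /= eqxx].
- by rewrite -E.
- by rewrite (@sat_xi_tau V adj _ _ v); [|rewrite /= eqxx].
- by rewrite E.
Qed.

Lemma sat_Theta V (adj : V -> V -> Prop) v (t : seq V) m :
  sat adj (@of_void V) (env_of (v :: t)) (Theta m) <->
  blocks p (fun u => sat adj (fun _ => v) (env_of u) phi) m t.
Proof.
rewrite (@sat_Conj_blocks V adj _ v _ _ _ t) //;
  try (by move=> b bm i; rewrite /sig; case: ltnP; lia);
  by move=> b j bm jp; rewrite add1n.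
Qed.

Lemma fv_Psi m : has_fv (p * m.+1) (Psi m).
Proof.
apply/allP => j /=; rewrite mem_filter => /andP [jy].
rewrite mem_cat => /orP [|/fv_Conj [[b [bm H1 H2]]|jy']]; last by rewrite jy' eqxx in jy.
  move=> /free_vars_fmap -/(_ (@tau_inj _)) [[i Hi E]|[[]]].
  have i0 : i = 0%N by move/allP: fv_xi => /(_ i Hi); case: i {Hi E}.
  by move: jy; rewrite E i0 /tau eqxx eqxx.
apply: (leq_trans H2); by rewrite add0n addnC -mulSn mulnC leq_mul2l ltnS bm orbT.
Qed.

Lemma fv_Theta m : has_fv (p * m.+1).+1 (Theta m).
Proof.
apply/allP => j /fv_Conj [[b [bm H1 H2]]|->] //.
apply: (leq_trans H2); by rewrite add1n addSn ltnS addnC -mulSn mulnC leq_mul2l ltnS bm orbT.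
Qed.
End Main_forms.
Section TM.
Context d (V : measurableType d) (R : realType) (nu : probability V R).
Local Open Scope ereal_scope.

Definition consf k (xt : V * k.-tuple V) : k.+1.-tuple V :=
  [the k.+1.-tuple V of xt.1 :: xt.2].

Lemma measurable_consf k : measurable_fun setT (@consf k).
Proof. exact: measurable_cons measurable_fst measurable_snd. Qed.

HB.instance Definition _ k := isMeasurableFun.Build _ _ _ _ (@consf k)
  (@measurable_consf k).

Lemma section_consf k (A : set (k.+1.-tuple V)) x :
  [set t : k.-tuple V | A (cons_tuple x t)] = xsection (@consf k @^-1` A) x.
Proof.
have E t : consf (x, t) = cons_tuple x t by apply: val_inj.
by apply/seteqP; split => t /=; rewrite /xsection /= inE /= E.
Qed.

Lemma measurable_section k (A : set (k.+1.-tuple V)) x : measurable A ->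
  measurable [set t : k.-tuple V | A (cons_tuple x t)].
Proof.
move=> mA; rewrite section_consf; apply: measurable_xsection.
by rewrite -[X in measurable X]setTI; apply: measurable_consf.
Qed.

Lemma tm_exists k : exists m : probability (k.-tuple V) R,
  forall A, measurable A -> m A = tuple_measure nu k A.
Proof.
elim: k => [|k [m Hm]].
  exists (\d_[tuple] : probability _ R) => A mA /=.
  rewrite diracE; case: asboolP => H.
    by rewrite mem_set.
  by rewrite memNset.
exists (distribution (nu \x m) (@consf k)) => A mA /=.
rewrite /distribution /pushforward /product_measure1 /=.
apply: eq_integral => x _ /=.
by rewrite -section_consf Hm //; apply: measurable_section.
Qed.
End TM.
Section TM2.
Context d (V : measurableType d) (R : realType) (nu : probability V R).
Local Open Scope ereal_scope.

Lemma tm_ge0 k (A : set (k.-tuple V)) : 0 <= tuple_measure nu k A.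
Proof.
elim: k A => [|k IH] A /=; first by case: asboolP.
by apply: integral_ge0 => x _; apply: IH.
Qed.

Lemma tm_le1 k (A : set (k.-tuple V)) : measurable A -> tuple_measure nu k A <= 1.
Proof. by move=> mA; have [m Hm] := tm_exists nu k; rewrite -Hm // probability_le1. Qed.

Lemma tm0 k : tuple_measure nu k set0 = 0.
Proof. by have [m Hm] := tm_exists nu k; rewrite -Hm // measure0. Qed.

Lemma le_tm k (A B : set (k.-tuple V)) : measurable A -> measurable B -> A `<=` B ->
  tuple_measure nu k A <= tuple_measure nu k B.
Proof.
move=> mA mB AB; have [m Hm] := tm_exists nu k; rewrite -!Hm //.
by apply: le_measure => //; rewrite inE.
Qed.

Lemma tmU2 k (A B : set (k.-tuple V)) : measurable A -> measurable B ->
  tuple_measure nu k (A `|` B) <= tuple_measure nu k A + tuple_measure nu k B.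
Proof.
move=> mA mB; have [m Hm] := tm_exists nu k; rewrite -!Hm //; last exact: measurableU.
exact: measureU2.
Qed.

Lemma mfun_tm_section k (A : set (k.+1.-tuple V)) : measurable A ->
  measurable_fun setT (fun x => tuple_measure nu k [set t | A (cons_tuple x t)]).
Proof.
move=> mA; have [m Hm] := tm_exists nu k.
have -> : (fun x => tuple_measure nu k [set t | A (cons_tuple x t)]) =
          m \o xsection (@consf _ V k @^-1` A).
  apply: funext => x /=; rewrite -section_consf Hm //.
  exact: measurable_section.
apply: measurable_fun_xsection.
by rewrite -[X in measurable X]setTI; apply: measurable_consf.
Qed.

Definition tmP n (P : seq V -> Prop) := tuple_measure nu n [set t : n.-tuple V | P t].

Lemma tmP_S n P : tmP n.+1 P = \int[nu]_x tmP n (fun s => P (x :: s)).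
Proof. by []. Qed.

Lemma tmP_prod p q (PA PB : seq V -> Prop) : measurable [set t : p.-tuple V | PA t] ->
  tmP (p + q) (fun s => PA (take p s) /\ PB (drop p s)) = tmP p PA * tmP q PB.
Proof.
elim: p PA => [|p IH] PA mA.
  rewrite add0n /tmP /=; case: asboolP => H.
    rewrite mul1e; congr tuple_measure; apply/seteqP; split => t /=;
      by rewrite take0 drop0 //; case.
  rewrite mul0e -(tm0 q); congr tuple_measure; apply/seteqP; split => t //=.
  by rewrite take0 => -[].
rewrite addSn tmP_S.
have mA' x : measurable [set t : p.-tuple V | PA (x :: t)].
  exact: (measurable_section x mA).
under eq_integral => x _ do rewrite /= (IH (fun s => PA (x :: s))) //.
rewrite ge0_integralZr //.
- exact: (mfun_tm_section mA).
- by move=> x _; apply: tm_ge0.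
- exact: tm_ge0.
Qed.
End TM2.
Section Core.
Variable R : realType.

Lemma bernoulli_ineq (h : R) n : 0 <= h -> 1 + n%:R * h <= (1 + h) ^+ n.
Proof.
move=> h0; elim: n => [|n IH]; first by rewrite mul0r addr0 expr0.
rewrite exprSr -natr1.
have H1 : 0 <= n%:R * h by rewrite mulr_ge0.
nra.
Qed.

Lemma pow_big (K : nat) (x y : R) : 0 <= x -> x < y ->
  exists m : nat, K%:R * x ^+ m.+1 < y ^+ m.+1.
Proof.
move=> x0 xy; have [->|xn0] := eqVneq x 0.
  by exists 0%N; rewrite expr0n /= mulr0 expr1 (le_lt_trans x0 xy).
have xp : 0 < x by rewrite lt_def xn0 x0.
set h := y / x - 1.
have hp : 0 < h by rewrite subr_gt0 ltr_pdivlMr // mul1r.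
have b0 : 0 <= K%:R / h by rewrite divr_ge0 // ltW.
pose n := (Num.bound (K%:R / h))%N.
have Hn : K%:R / h < n%:R by apply: archi_boundP.
exists n; have := bernoulli_ineq n.+1 (ltW hp).
have E : 1 + h = y / x by rewrite /h addrC subrK.
rewrite E expr_div_n => Hb.
have xn : 0 < x ^+ n.+1 by rewrite exprn_gt0.
have : K%:R < y ^+ n.+1 / x ^+ n.+1.
  apply: lt_le_trans Hb; rewrite -/h.
  have : K%:R < n%:R * h by rewrite -ltr_pdivrMr.
  rewrite -natr1 mulrDl mul1r; have : 0 < h := hp; nra.
by rewrite ltr_pdivlMr // mulrC.
Qed.

Lemma core (K : nat) (a : nat -> R) (c : R) (U : nat -> nat -> R) (UL : nat -> R) :
  (0 < K)%N -> 0 <= c -> (forall n, 0 <= a n) ->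
  (forall n m, a n ^+ m.+1 <= U n m /\ U n m <= K%:R * a n ^+ m.+1) ->
  (forall m, c ^+ m.+1 <= UL m /\ UL m <= K%:R * c ^+ m.+1) ->
  (forall m, (fun n => U n m) @ \oo --> UL m) -> a @ \oo --> c.
Proof.
move=> K0 c0 a0 HU HL Hc; apply/cvgrPdist_lt => e e0.
have Kp : 0 < K%:R :> R by rewrite ltr0n.
have ce1 : c < c + e by rewrite ltrDl.
have [m1 Hm1] := pow_big K c0 ce1.
have up : \forall n \near \oo, a n < c + e.
  have d0 : 0 < (c + e) ^+ m1.+1 - UL m1.
    by rewrite subr_gt0; apply: le_lt_trans Hm1; case: (HL m1).
  have HH := (cvgrPdist_lt _ _).1 (Hc m1) _ d0.
  near=> n; have Hn : `|UL m1 - U n m1| < (c + e) ^+ m1.+1 - UL m1.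
    by near: n; exact: HH.
  have H1 : U n m1 < (c + e) ^+ m1.+1.
    move: Hn; rewrite ltr_norml => /andP [Hn _]; lra.
  have H2 := (HU n m1).1.
  rewrite -(ltr_pXn2r (ltn0Sn m1)) ?nnegrE ?addr_ge0 ?(ltW e0) //.
  exact: le_lt_trans H2 H1.
have lo : \forall n \near \oo, c - e < a n.
  have [ce|ce] := ltP (c - e) 0.
    by near=> n; apply: lt_le_trans ce (a0 n).
  have ce2 : c - e < c by rewrite ltrBlDr ltrDl.
  have [m2 Hm2] := pow_big K ce ce2.
  have d0 : 0 < UL m2 - K%:R * (c - e) ^+ m2.+1.
    by rewrite subr_gt0; apply: lt_le_trans Hm2 _; case: (HL m2).
  have HH := (cvgrPdist_lt _ _).1 (Hc m2) _ d0.
  near=> n; have Hn : `|UL m2 - U n m2| < UL m2 - K%:R * (c - e) ^+ m2.+1.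
    by near: n; exact: HH.
  have H1 : K%:R * (c - e) ^+ m2.+1 < U n m2.
    move: Hn; rewrite ltr_norml => /andP [_]; lra.
  have H2 := (HU n m2).2.
  have H3 : (c - e) ^+ m2.+1 < a n ^+ m2.+1.
    rewrite -(ltr_pM2l Kp); exact: lt_le_trans H1 H2.
  by move: H3; rewrite (ltr_pXn2r (ltn0Sn m2)) ?nnegrE.
near=> n; rewrite ltr_distlC; apply/andP; split; near: n; [exact: lo| exact: up].
Unshelve. all: by end_near.
Qed.
End Core.
Section Count.
Variable W : finType.

Definition cntP n (P : seq W -> Prop) : nat := #|finset (fun t : n.-tuple W => `[< P t >])|.

Lemma card_sum (T : finType) (b : T -> bool) : #|finset (fun t => b t)| = (\sum_t (b t : nat))%N.
Proof.
rewrite -sum1_card big_mkcond /=; apply: eq_bigr => t _; rewrite inE.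
by case: (b t).
Qed.

Lemma cntP_S n P : cntP n.+1 P = (\sum_(x : W) cntP n (fun s => P (x :: s)))%N.
Proof.
rewrite /cntP card_sum.
have hb : {on [pred i | true], bijective (fun xt : W * n.-tuple W => cons_tuple xt.1 xt.2)}.
  exists (fun t : n.+1.-tuple W => (thead t, [tuple of behead t])).
    by move=> [x t] _ /=; congr pair; apply: val_inj.
  by move=> t _ /=; rewrite [RHS]tuple_eta; apply: val_inj.
rewrite (reindex _ hb) /= -(pair_big xpredT xpredT (fun x t => (`[< P (x :: tval t) >] : nat))) /=.
by apply: eq_bigr => x _; rewrite card_sum.
Qed.

Lemma cntP_0 P : cntP 0 P = (`[< P [::] >] : nat).
Proof.
rewrite /cntP card_sum (big_pred1 [tuple]) // => t /=.
by apply/esym/eqP; apply: tuple0.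
Qed.

Lemma cntP_ext n P Q : (forall s, size s = n -> (P s <-> Q s)) -> cntP n P = cntP n Q.
Proof.
move=> H; rewrite /cntP; apply: eq_card => t; rewrite !inE.
by apply/asboolP/asboolP => /H; apply; rewrite size_tuple.
Qed.

Lemma cntP_prod p q (PA PB : seq W -> Prop) :
  cntP (p + q) (fun s => PA (take p s) /\ PB (drop p s)) = (cntP p PA * cntP q PB)%N.
Proof.
elim: p PA => [|p IH] PA.
  rewrite add0n cntP_0; case: asboolP => H.
    by rewrite mul1n; apply: cntP_ext => s _; rewrite take0 drop0; split => // -[].
  rewrite mul0n /cntP; apply/eqP; rewrite cards_eq0; apply/eqP/setP => t.
  by rewrite !inE; apply/asboolP; rewrite take0 => -[].
rewrite addSn !cntP_S big_distrl /=; apply: eq_bigr => x _.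
by rewrite -(IH (fun s => PA (x :: s))).
Qed.

Lemma cnt_union (U : finType) (X : {set U}) n (Q : U -> seq W -> Prop) :
  (cntP n (fun s => exists2 u, u \in X & Q u s) <= \sum_(u in X) cntP n (Q u))%N.
Proof.
rewrite /cntP card_sum.
under [X in (_ <= X)%N]eq_bigr => u _ do rewrite card_sum.
rewrite exchange_big /=; apply: leq_sum => t _.
case: asboolP => // -[u uX Qu].
by rewrite (bigD1 u) //= asboolT.
Qed.

Lemma cnt_sub n (P Q : seq W -> Prop) : (forall s, P s -> Q s) -> (cntP n P <= cntP n Q)%N.
Proof.
move=> H; apply: subset_leq_card; apply/fintype.subsetP => t; rewrite !inE.
exact: H.
Qed.
End Count.
Lemma argmax_seq (R : realType) (T : eqType) (f : T -> R) (s : seq T) x0 :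
  x0 \in s -> exists2 r, r \in s & forall u, u \in s -> f u <= f r.
Proof.
elim: s x0 => [//|x s IH] x0 _.
have [/hasP [y ys _]|] := boolP (has predT s).
  have [r rs Hr] := IH y ys.
  have [le|lt] := leP (f x) (f r).
    by exists r; rewrite ?inE ?rs ?orbT // => u; rewrite inE => /orP [/eqP ->|/Hr].
  exists x; rewrite ?inE ?eqxx // => u; rewrite inE => /orP [/eqP ->//|/Hr H].
  exact: le_trans H (ltW lt).
rewrite has_predT lt0n negbK => /eqP /size0nil ->.
by exists x; rewrite ?inE ?eqxx // => u; rewrite inE => /eqP ->.
Qed.

Section FinSide.
Variables (p : nat) (phi : rooted_formula) (xi : graph_formula).
Hypothesis fv_phi : has_fv p phi.
Hypothesis fv_xi : has_fv 1 xi.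
Variables (R : realType) (G : fin_graph).

Definition Pu (u : fvert G) (s : seq (fvert G)) := sat (@fgadj G) (fun _ => u) (env_of s) phi.

Lemma cnt_blocks u m : cntP (p * m.+1) (blocks p (Pu u) m) = (cntP p (Pu u) ^ m.+1)%N.
Proof.
elim: m => [|m IH].
  rewrite muln1 expn1; apply: cntP_ext => s ss /=.
  by rewrite -ss take_size.
have -> : blocks p (Pu u) m.+1 = fun s => Pu u (take p s) /\ blocks p (Pu u) m (drop p s) by [].
by rewrite mulnS cntP_prod [in RHS]expnS IH.
Qed.

Lemma cnt_Psi m : cntP (p * m.+1) (fun s => sat (@fgadj G) (@of_void (fvert G)) (env_of s) (Psi p phi xi m)) =
  cntP (p * m.+1) (fun s => exists2 u, u \in fdefset1 (@of_void (fvert G)) xi & blocks p (Pu u) m s).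
Proof.
apply: cntP_ext => s ss; rewrite sat_Psi //; split => -[u].
  by move=> [H1 H2]; exists u => //; rewrite inE; apply: asboolT.
by rewrite inE => /asboolW H1 H2; exists u.
Qed.

Lemma fpairing_pos C (c : C -> fvert G) n f : (0 < n)%N ->
  fpairing R c n f = (cntP n (fun s => sat (@fgadj G) c (env_of s) f))%:R / (#|fvert G|%:R ^+ n).
Proof. by case: n. Qed.

Lemma fin_bounds r m : (0 < p)%N -> r \in fdefset1 (@of_void (fvert G)) xi ->
  (forall u, u \in fdefset1 (@of_void (fvert G)) xi -> (cntP p (Pu u) <= cntP p (Pu r))%N) ->
  let a := fpairing R (fun _ => r) p phi in
  let U := fpairing R (@of_void (fvert G)) (p * m.+1) (Psi p phi xi m) in
  a ^+ m.+1 <= U /\ U <= #|fdefset1 (@of_void (fvert G)) xi|%:R * a ^+ m.+1.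
Proof.
move=> p0 rX Hr a U.
have pm0 : (0 < p * m.+1)%N by rewrite muln_gt0 p0.
set D := (#|fvert G|%:R ^+ (p * m.+1)) : R.
have D0 : 0 <= D^-1 by rewrite invr_ge0 exprn_ge0.
have Ea : a ^+ m.+1 = (cntP p (Pu r) ^ m.+1)%:R / D.
  by rewrite /a fpairing_pos // expr_div_n -exprM natrX.
have EU : U = (cntP (p * m.+1) (fun s => exists2 u, u \in fdefset1 (@of_void (fvert G)) xi
    & blocks p (Pu u) m s))%:R / D by rewrite /U fpairing_pos // cnt_Psi.
rewrite Ea EU mulrA -natrM; split; apply: ler_wpM2r => //; rewrite ler_nat.
- rewrite -cnt_blocks; apply: cnt_sub => s H; exists r => //.
- apply: leq_trans (cnt_union _ _ _) _.
  apply: leq_trans (_ : (\sum_(u in fdefset1 (@of_void (fvert G)) xi) cntP p (Pu r) ^ m.+1 <= _)%N).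
    apply: leq_sum => u uX; rewrite cnt_blocks; rewrite leq_exp2r //; exact: Hr.
  by rewrite sum_nat_const.
Qed.
End FinSide.
Lemma transport_meas d (V : measurableType d) n n' (P : seq V -> Prop) : n = n' ->
  measurable [set t : n.-tuple V | P t] -> measurable [set t : n'.-tuple V | P t].
Proof. by move=> <-. Qed.

Lemma sum_const_le (R : realType) (T : eqType) (s : seq T) (f : T -> R) k :
  (forall v, v \in s -> f v <= k) -> \sum_(v <- s) f v <= (size s)%:R * k.
Proof.
elim: s => [|x s IH] H; first by rewrite big_nil mul0r.
rewrite big_cons /= -natr1 mulrDl mul1r addrC lerD ?H ?inE ?eqxx //.
by apply: IH => v vs; apply: H; rewrite inE vs orbT.
Qed.

Section LSide.
Variables (p : nat) (phi : rooted_formula) (xi : graph_formula).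
Hypothesis fv_phi : has_fv p phi.
Hypothesis fv_xi : has_fv 1 xi.
Context d (V : measurableType d) (R : realType) (nu : probability V R) (adjL : V -> V -> Prop).
Hypothesis Hmod : is_modeling nu adjL.
Local Open Scope ereal_scope.

Definition PL (v : V) (s : seq V) := sat adjL (fun _ => v) (env_of s) phi.

Lemma meas_blocks v m : measurable [set t : (p * m.+1).-tuple V | blocks p (PL v) m t].
Proof.
have mD : measurable (defset adjL (@of_void V) (p * m.+1).+1 (Theta p phi m)).
  by case: Hmod => _ _ _ H; apply: H => //; apply: fv_Theta.
have := measurable_section v mD.
congr measurable; apply/seteqP; split => t /=; rewrite /defset /=;
  by rewrite (sat_Theta fv_phi).
Qed.

Lemma meas_PL v : measurable [set t : p.-tuple V | PL v t].
Proof.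
have := transport_meas (muln1 p) (@meas_blocks v 0%N).
congr measurable; apply/seteqP; split => t /=; by rewrite take_oversize ?size_tuple.
Qed.

Lemma tmP_fin n (P : seq V -> Prop) : measurable [set t : n.-tuple V | P t] ->
  tmP nu n P \is a fin_num.
Proof.
move=> mP; rewrite ge0_fin_numE ?tm_ge0 //.
by apply: le_lt_trans (tm_le1 nu mP) _; rewrite ltey.
Qed.

Lemma tm_blocks v m : tmP nu (p * m.+1) (blocks p (PL v) m) = (fine (tmP nu p (PL v)) ^+ m.+1)%:E.
Proof.
have fin := tmP_fin (@meas_PL v).
elim: m => [|m IH].
  rewrite expr1 (fineK fin) muln1 /tmP; congr tuple_measure.
  by apply/seteqP; split => t /=; rewrite take_oversize ?size_tuple.
have -> : blocks p (PL v) m.+1 = fun s => PL v (take p s) /\ blocks p (PL v) m (drop p s) by [].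
rewrite mulnS (@tmP_prod _ _ _ nu p (p * m.+1) (PL v) (blocks p (PL v) m)); last exact: meas_PL.
by rewrite [in RHS]exprS IH EFinM (fineK fin).
Qed.

Lemma L_union (s : seq V) m :
  measurable [set t : (p * m.+1).-tuple V | exists2 v, v \in s & blocks p (PL v) m t] /\
  tuple_measure nu _ [set t : (p * m.+1).-tuple V | exists2 v, v \in s & blocks p (PL v) m t]
   <= \sum_(v <- s) tmP nu (p * m.+1) (blocks p (PL v) m).
Proof.
elim: s => [|x s [IH1 IH2]].
  rewrite big_nil (_ : [set t | _] = set0) ?tm0 //.
  by apply/seteqP; split => t //= -[].
have -> : [set t : (p * m.+1).-tuple V | exists2 v, v \in x :: s & blocks p (PL v) m t] =
    [set t : (p * m.+1).-tuple V | blocks p (PL x) m t] `|`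
    [set t : (p * m.+1).-tuple V | exists2 v, v \in s & blocks p (PL v) m t].
  apply/seteqP; split => t /=.
    by move=> [v]; rewrite inE => /orP [/eqP ->|vs H]; [left|right; exists v].
  by move=> [H|[v vs H]]; [exists x; rewrite ?inE ?eqxx|exists v; rewrite ?inE ?vs ?orbT].
split; first exact: measurableU (@meas_blocks x m) IH1.
rewrite big_cons; apply: le_trans (tmU2 _ (@meas_blocks x m) IH1) _.
by rewrite leeD2l.
Qed.

Lemma mpairing_pos C (c : C -> V) n f : (0 < n)%N ->
  mpairing nu adjL c n f = fine (tuple_measure nu n (defset adjL c n f)).
Proof. by case: n. Qed.

Lemma L_bounds r (s : seq V) m : (0 < p)%N ->
  mdefset1 adjL (@of_void V) xi = [set` s] -> r \in s ->
  (forall v, v \in s -> (fine (tmP nu p (PL v)) <= fine (tmP nu p (PL r)))%R) ->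
  let c := mpairing nu adjL (fun _ => r) p phi in
  let UL := mpairing nu adjL (@of_void V) (p * m.+1) (Psi p phi xi m) in
  (c ^+ m.+1 <= UL)%R /\ (UL <= (size s)%:R * c ^+ m.+1)%R.
Proof.
move=> p0 Hs rs Hr c UL.
have pm0 : (0 < p * m.+1)%N by rewrite muln_gt0 p0.
have Ec : c = fine (tmP nu p (PL r)) by rewrite /c mpairing_pos.
have ES : defset adjL (@of_void V) (p * m.+1) (Psi p phi xi m) =
    [set t : (p * m.+1).-tuple V | exists2 v, v \in s & blocks p (PL v) m t].
  apply/seteqP; split => t.
    move/(@sat_Psi p phi xi fv_phi fv_xi V adjL t m (size_tuple t)) => [v [H1 H2]]; exists v => //.
    have : mdefset1 adjL (@of_void V) xi v by [].
    by rewrite Hs.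
  move=> [v vs H]; apply/(@sat_Psi p phi xi fv_phi fv_xi V adjL t m (size_tuple t)); exists v; split => //.
  have : [set` s] v by [].
  by rewrite -Hs.
have [mS HS] := L_union s m.
have EU : UL = fine (tuple_measure nu _ [set t : (p * m.+1).-tuple V |
    exists2 v, v \in s & blocks p (PL v) m t]) by rewrite /UL mpairing_pos // ES.
have finS := @tmP_fin (p * m.+1) (fun u => exists2 v, v \in s & blocks p (PL v) m u) mS.
rewrite EU Ec; split.
  have -> : (fine (tmP nu p (PL r)) ^+ m.+1 = fine ((fine (tmP nu p (PL r)) ^+ m.+1)%:E))%R by [].
  rewrite -tm_blocks; apply: fine_le => //; first exact: tmP_fin (@meas_blocks r m).
  apply: le_tm => //; first exact: meas_blocks.
  by move=> t H; exists r.
have HS' : tuple_measure nu _ [set t : (p * m.+1).-tuple V | exists2 v, v \in s & blocks p (PL v) m t]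
    <= ((\sum_(v <- s) fine (tmP nu p (PL v)) ^+ m.+1)%R)%:E.
  apply: le_trans HS _; rewrite -sumEFin; apply: lee_sum => v _; by rewrite tm_blocks.
apply: le_trans (fine_le finS _ HS') _ => //=.
apply: sum_const_le => v vs; rewrite lerXn2r ?nnegrE ?fine_ge0 ?tm_ge0 //.
exact: Hr.
Qed.
End LSide.
Lemma env_nil (T : Type) : env_of (@nil T) = fun _ => None.
Proof. by apply: funext => -[]. Qed.

Local Open Scope card_scope.
Theorem lemma3 (R : realType) (G : nat -> fin_graph)
  (d : measure_display) (V : measurableType d) (nu : probability V R)
  (adjL : V -> V -> Prop) (xi : graph_formula) :
  FO_convergent R G ->
  modeling_limit G nu adjL ->
  has_fv 1 xi ->
  finite_set (mdefset1 adjL (@of_void V) xi) ->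
  mdefset1 adjL (@of_void V) xi != set0 ->
  (forall chi : graph_formula, has_fv 1 chi ->
     ~ [/\ mdefset1 adjL (@of_void V) chi `<=` mdefset1 adjL (@of_void V) xi,
           mdefset1 adjL (@of_void V) chi != set0 &
           mdefset1 adjL (@of_void V) chi != mdefset1 adjL (@of_void V) xi]) ->
  (forall n, mdefset1 adjL (@of_void V) xi
               #= `I_(#|fdefset1 (@of_void _) xi : {set fvert (G n)}|)) ->
  forall p (phi : rooted_formula), has_fv p phi ->
    exists rn : forall n, fvert (G n),
      (forall n, rn n \in fdefset1 (@of_void _) xi) /\
      exists r : V, mdefset1 adjL (@of_void V) xi r /\
        (fun n => @fpairing R _ (G n) (fun _ => rn n) p phi) @ \oo
          --> mpairing nu adjL (fun _ : unit => r) p phi.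
Proof.
move=> FOc [Hmod Hlim] fv_xi Hfin Hne Hnodef Hcard p phi fv_phi.
have [s Hs] : exists s : seq V, mdefset1 adjL (@of_void V) xi = [set` s].
  exact/finite_seqP.
have [v0 Xv0] : exists v0, mdefset1 adjL (@of_void V) xi v0 by apply/set0P.
have v0s : v0 \in s by move: Xv0; rewrite Hs.
have XGne n : exists u : fvert (G n), u \in fdefset1 (@of_void (fvert (G n))) xi.
  apply/set0Pn; apply/negP => /eqP E; have := Hcard n.
  rewrite E cards0 II0 card_eq0 => /eqP XL0.
  by rewrite XL0 in Xv0.
case: p phi fv_phi => [|p'] phi fv_phi.
  have Hr n : exists r : fvert (G n), r \in fdefset1 (@of_void (fvert (G n))) xi /\
      ((exists2 u, u \in fdefset1 (@of_void (fvert (G n))) xi &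
          sat (@fgadj (G n)) (fun _ => u) (fun _ => None) phi) ->
       sat (@fgadj (G n)) (fun _ => r) (fun _ => None) phi).
    have [u0 Hu0] := XGne n.
    case: (pselect (exists2 u, u \in fdefset1 (@of_void (fvert (G n))) xi &
          sat (@fgadj (G n)) (fun _ => u) (fun _ => None) phi)) => [[u uX Hu]|N].
      by exists u; split.
    by exists u0; split => // H; exfalso; apply: N.
  pose rn n := proj1_sig (cid (Hr n)).
  have rnX n : rn n \in fdefset1 (@of_void (fvert (G n))) xi by case: (proj2_sig (cid (Hr n))).
  have rnS n := proj2 (proj2_sig (cid (Hr n))).
  have [r [Xr HrL]] : exists r, mdefset1 adjL (@of_void V) xi r /\
      ((exists2 v, mdefset1 adjL (@of_void V) xi v & sat adjL (fun _ => v) (fun _ => None) phi) ->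
       sat adjL (fun _ => r) (fun _ => None) phi).
    case: (pselect (exists2 v, mdefset1 adjL (@of_void V) xi v &
          sat adjL (fun _ => v) (fun _ => None) phi)) => [[v vX Hv]|N].
      by exists v; split.
    by exists v0; split => // H; exfalso; apply: N.
  exists rn; split => //; exists r; split => //.
  have EG n : fpairing R (fun _ => rn n) 0 phi =
      fpairing R (@of_void (fvert (G n))) 0 (Psi 0 phi xi 0).
    rewrite /fpairing -!env_nil; congr (if _ then _ else _); apply/idP/idP => /asboolP H; apply/asboolP.
      apply/(@sat_Psi 0%N phi xi fv_phi fv_xi _ _ [::] 0%N erefl).
      exists (rn n); split => //.
      by move: (rnX n); rewrite inE => /asboolW.
    move/(@sat_Psi 0%N phi xi fv_phi fv_xi _ _ [::] 0%N erefl): H => [u [Hxi Hb]].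
    rewrite env_nil; apply: rnS; exists u; first by rewrite inE; apply: asboolT.
    by move: Hb => /=; rewrite env_nil.
  have EL : mpairing nu adjL (fun _ => r) 0 phi =
      mpairing nu adjL (@of_void V) 0 (Psi 0 phi xi 0).
    rewrite /mpairing -!env_nil; congr (if _ then _ else _); apply/idP/idP => /asboolP H; apply/asboolP.
      apply/(@sat_Psi 0%N phi xi fv_phi fv_xi _ _ [::] 0%N erefl).
      by exists r; split.
    move/(@sat_Psi 0%N phi xi fv_phi fv_xi _ _ [::] 0%N erefl): H => [u [Hxi Hb]].
    rewrite env_nil; apply: HrL; exists u => //.
    by move: Hb => /=; rewrite env_nil.
  have := Hlim _ _ (fv_Psi fv_phi fv_xi 0%N); rewrite mul0n.
  by rewrite (funext EG) EL.
set p := p'.+1.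
have p0 : (0 < p)%N by [].
have Hr n : exists r : fvert (G n), r \in fdefset1 (@of_void (fvert (G n))) xi /\
    forall u, u \in fdefset1 (@of_void (fvert (G n))) xi -> (cntP p (Pu phi u) <= cntP p (Pu phi r))%N.
  have [u0 Hu0] := XGne n.
  have u0e : u0 \in enum (fdefset1 (@of_void (fvert (G n))) xi) by rewrite mem_enum.
  have [r rs Hr] := @argmax_seq R _ (fun u => (cntP p (Pu phi u))%:R) _ _ u0e.
  exists r; split; first by rewrite -mem_enum.
  by move=> u uX; rewrite -(ler_nat R); apply: Hr; rewrite mem_enum.
pose rn n := proj1_sig (cid (Hr n)).
have rnX n : rn n \in fdefset1 (@of_void (fvert (G n))) xi by case: (proj2_sig (cid (Hr n))).
have rnM n : forall u, u \in fdefset1 (@of_void (fvert (G n))) xi ->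
    (cntP p (Pu phi u) <= cntP p (Pu phi (rn n)))%N by case: (proj2_sig (cid (Hr n))).
have [r rs Hr'] := argmax_seq (fun v => fine (tmP nu p (PL phi adjL v))) v0s.
have HK n : #|fdefset1 (@of_void (fvert (G n))) xi| = #|fdefset1 (@of_void (fvert (G 0))) xi|.
  apply/card_eq_II; apply: card_eq_trans (Hcard 0%N).
  by rewrite card_eq_sym; apply: Hcard.
set K := (#|fdefset1 (@of_void (fvert (G 0))) xi| + size s)%N.
have K0 : (0 < K)%N.
  rewrite /K addn_gt0; apply/orP; right.
  by case: (s) v0s.
exists rn; split => //.
exists r; split; first by rewrite Hs.
apply: (@core R K _ _ (fun n m => fpairing R (@of_void (fvert (G n))) (p * m.+1) (Psi p phi xi m))
   (fun m => mpairing nu adjL (@of_void V) (p * m.+1) (Psi p phi xi m))) => //.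
- by rewrite mpairing_pos // fine_ge0 // tm_ge0.
- by move=> n; rewrite fpairing_pos // divr_ge0 // exprn_ge0.
- move=> n m; have [H1 H2] := fin_bounds fv_phi fv_xi R m p0 (rnX n) (rnM n).
  split => //; apply: le_trans H2 _; rewrite HK; apply: ler_wpM2r.
    by rewrite exprn_ge0 // fpairing_pos // divr_ge0 // exprn_ge0.
  by rewrite ler_nat leq_addr.
- move=> m; have [H1 H2] := L_bounds fv_phi fv_xi Hmod m p0 Hs rs Hr'.
  split => //; apply: le_trans H2 _; apply: ler_wpM2r.
    by rewrite exprn_ge0 // mpairing_pos // fine_ge0 // tm_ge0.
  by rewrite ler_nat leq_addl.
- by move=> m; apply: Hlim; apply: fv_Psi.
Qed.
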